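(* Let $a\in[0,\infty)$ and let $\theta:[0,1]\to[0,\infty]$ and $\vartheta:[0,\infty]\to[0,1]$ be continuous and decreasing functions such that (i) $\vartheta(x)=1$ if and only if $x\in[0,a]$, and (ii) the function $O_{\theta,\vartheta}:[0,1]^2\to[0,1]$, $O_{\theta,\vartheta}(x,y)=\vartheta(\theta(x)+\theta(y))$, is an overlap function. Then $\theta(x)=\frac{a}{2}$ if and only if $x=1$.
   Context: ''Decreasing'' means non-increasing and ''increasing'' means non-decreasing. Arithmetic in $[0,\infty]$ uses $c+\infty=\infty$; continuity on $[0,\infty]$ refers to the usual topology of the extended half-line. An overlap function is a map $O:[0,1]^2\to[0,1]$ that is (O1) commutative, (O2) $O(x,y)=0$ iff $xy=0$, (O3) $O(x,y)=1$ iff $xy=1$, (O4) increasing in each variable, (O5) continuous. *)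

(* Defs.v *)
From HB Require Import structures.
From mathcomp Require Import all_boot all_order all_algebra.
From mathcomp Require Import all_classical all_reals all_analysis.
Set Implicit Arguments. Unset Strict Implicit. Unset Printing Implicit Defensive.
Import Order.TTheory GRing.Theory Num.Theory.
Import numFieldNormedType.Exports.
Local Open Scope classical_set_scope.
Local Open Scope ring_scope.

Definition unitI (R : realType) (x : R) : bool := (0 <= x) && (x <= 1).

(* Overlap function O : [0,1]^2 -> [0,1], represented as a map R -> R -> R
   whose behaviour outside [0,1]^2 is irrelevant. *)
Definition overlap (R : realType) (O : R -> R -> R) : Prop :=
  (forall x y, unitI x -> unitI y -> unitI (O x y)) /\
  (forall x y, unitI x -> unitI y -> O x y = O y x) /\
  (forall x y, unitI x -> unitI y -> (O x y = 0 <-> x * y = 0)) /\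
  (forall x y, unitI x -> unitI y -> (O x y = 1 <-> x * y = 1)) /\
  (forall x x' y, unitI x -> unitI x' -> unitI y -> x <= x' -> O x y <= O x' y) /\
  (forall x y y', unitI x -> unitI y -> unitI y' -> y <= y' -> O x y <= O x y') /\
  {within [set p : R * R | unitI p.1 /\ unitI p.2],
     continuous (fun p : R * R => O p.1 p.2)}.

(* Main.v *)
Require Import Defs.
From HB Require Import structures.
From mathcomp Require Import all_boot all_order all_algebra.
From mathcomp Require Import all_classical all_reals all_analysis.
From mathcomp Require Import lra.
Import Order.TTheory GRing.Theory Num.Theory.
Import numFieldNormedType.Exports.
Local Open Scope classical_set_scope.
Local Open Scope ring_scope.

Theorem proposition3p1 (R : realType) (a : R) (theta : R -> \bar R)
  (vtheta : \bar R -> R) :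
  0 <= a ->
  (* theta : [0,1] -> [0,oo] *)
  (forall x, unitI x -> (0 <= theta x)%E) ->
  {within [set x : R | unitI x], continuous theta} ->
  (forall x y, unitI x -> unitI y -> x <= y -> (theta y <= theta x)%E) ->
  (* vtheta : [0,oo] -> [0,1] *)
  (forall u : \bar R, (0 <= u)%E -> unitI (vtheta u)) ->
  {within [set u : \bar R | (0 <= u)%E], continuous vtheta} ->
  (forall u v : \bar R, (0 <= u)%E -> (0 <= v)%E -> (u <= v)%E ->
     vtheta v <= vtheta u) ->
  (* (i) *)
  (forall u : \bar R, (0 <= u)%E -> (vtheta u = 1 <-> (u <= a%:E)%E)) ->
  (* (ii) *)
  overlap (fun x y => vtheta (theta x + theta y)%E) ->
  forall x, unitI x -> (theta x = (a / 2)%:E <-> x = 1).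
Proof.
move=> a0 th0 thc thd vt01 vtc vtd vt1 HO x ux.
have O3 := HO.2.2.2.1.
have u1 : unitI (1 : R) by rewrite /unitI ler01 lexx.
have H11 := (O3 1 1 u1 u1).2 (mulr1 1).
have := (vt1 _ (adde_ge0 (th0 _ u1) (th0 _ u1))).1 H11.
case E1 : (theta 1) (th0 _ u1) => [t| |] // t0.
rewrite -EFinD lee_fin => t2a.
have key : forall y, unitI y -> y < 1 -> (a%:E < theta y + t%:E)%E.
  move=> y uy y1; rewrite ltNge; apply/negP => hle.
  have := (vt1 _ (adde_ge0 (th0 _ uy) (th0 _ u1))).2; rewrite E1 => /(_ hle).
  by rewrite -E1 => /(O3 y 1 uy u1); rewrite mulr1 => y1'; move: y1; rewrite y1' ltxx.
have ta : t = a / 2.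
  apply/eqP; rewrite eq_le; apply/andP; split.
    lra.
  rewrite leNgt; apply/negP => ta.
  pose e := a / 2 - t.
  have e0 : 0 < e by rewrite subr_gt0.
  have := (@subspace_continuousP _ [set x : R | unitI x] _ theta).1 thc 1 u1.
  rewrite E1 => /(_ [set z : \bar R | (z < (t + e)%:E)%E]).
  have nU : nbhs t%:E [set z : \bar R | (z < (t + e)%:E)%E].
    apply/nbhs_EFin/nbhs_ballP; exists e => //= z.
    rewrite /ball /= lte_fin => hz.
    have : z - t <= `|t - z| by rewrite distrC ler_norm.
    lra.
  move=> /(_ nU) /nbhs_ballP [d /= d0 Hd].
  pose y := 1 - Num.min d 1 / 2.
  have m0 : 0 < Num.min d 1 by rewrite lt_min d0 ltr01.
  have m1 : Num.min d 1 <= 1 by rewrite ge_min lexx orbT.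
  have md : Num.min d 1 <= d by rewrite ge_min lexx.
  have uy : unitI y by rewrite /unitI /y; apply/andP; split; lra.
  have y1 : y < 1 by rewrite /y; lra.
  have : ball (1:R) d y.
    rewrite /ball /= /y opprB addrC subrK ger0_norm; lra.
  move=> /Hd /(_ uy) /= hy.
  have := key y uy y1.
  move: hy; case: (theta y) => [r| |] //= hr.
  rewrite -EFinD !lte_fin in hr *; rewrite /e in hr; lra.
split.
  move=> hx; apply/eqP; rewrite eq_le; apply/andP; split; first by case/andP: ux.
  rewrite leNgt; apply/negP => x1.
  by have := key x ux x1; rewrite hx -EFinD lte_fin ta; lra.
by move=> ->; rewrite E1 ta.
Qed.
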